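(* Let $q\ge3$ be a prime power, $s\in\mathbb{N}$ with $s\mid q-1$, $\Gamma$ the subgroup of $\mathbb{F}_q^*$ of order $\frac{q-1}{s}$, and $H\subset\mathbb{F}_q^*$ a set of $r$ elements lying in pairwise distinct cosets of $\Gamma$. Let $H\Gamma=\{h\gamma:h\in H,\gamma\in\Gamma\}$ and $E=\{x(1,y)\in\mathbb{F}_q^2: x,y\in H\Gamma\}$. If $$(q-1)^6r^6+(q-1)s^5q^5r-s^6(q^6+q^5)>0$$ and $\varpi\colon(\mathbb{F}_q^2)^{\otimes 3}\to\mathbb{F}_q$ is a ternary form non-degenerate in some coordinate, then $\mathbb{F}_q^*\subset\varpi(E^3)=\{\varpi(x,y,z):x,y,z\in E\}$.
   Context: A 3-linear form $\varpi$ on $\mathbb{F}_q^2$ is non-degenerate in coordinate $j$ if for every nonzero $y\in\mathbb{F}_q^2$ the bilinear map obtained by fixing the $j$-th argument equal to $y$ is not identically zero. $\mathbb{F}_q^*=\mathbb{F}_q\setminus\{0\}$. *)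

(* Defs.v *)
From HB Require Import structures.
From mathcomp Require Import all_boot all_order all_algebra all_fingroup all_field.
Set Implicit Arguments. Unset Strict Implicit. Unset Printing Implicit Defensive.
Import GRing.Theory.
Local Open Scope ring_scope.

(* Vectors of F_q^2 are pairs (a, b) : F * F. A 3-linear form on F^2 is given
   by its coefficient tensor c : 'I_2 -> 'I_2 -> 'I_2 -> F. *)
Definition coord (F : ringType) (v : F * F) (i : 'I_2) : F :=
  if val i == 0%N then v.1 else v.2.

Definition form3 (F : ringType) (c : 'I_2 -> 'I_2 -> 'I_2 -> F)
  (x y z : F * F) : F :=
  \sum_(i < 2) \sum_(j < 2) \sum_(k < 2) c i j k * coord x i * coord y j * coord z k.

Definition nondeg_in (F : ringType) (c : 'I_2 -> 'I_2 -> 'I_2 -> F) (j : 'I_3) : Prop :=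
  forall v : F * F, v != (0, 0) ->
    exists u w : F * F,
      (if val j == 0%N then form3 c v u w
       else if val j == 1%N then form3 c u v w
       else form3 c u w v) != 0.

(* Main.v *)
Require Import Defs.
From HB Require Import structures.
From mathcomp Require Import all_boot all_order all_algebra all_fingroup all_field.
From mathcomp Require Import ring zify.
Import GRing.Theory.
Local Open Scope ring_scope.

Lemma ineq_step (q s r : nat) : (3 <= q)%N ->
  (s ^ 6 * (q ^ 6 + q ^ 5) < (q - 1) ^ 6 * r ^ 6 + (q - 1) * s ^ 5 * q ^ 5 * r)%N ->
  (s < 2 * r)%N.
Proof.
move=> hq hi; rewrite ltnNge; apply/negP => h2.
move: hi; set q1 := (q - 1)%N => hi.
have hq1 : (q1 <= q)%N by rewrite /q1 leq_subr.
have A : (q1 * (2 * r) <= q * s)%N by apply: leq_mul.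
have A6 : ((q1 * (2 * r)) ^ 6 <= (q * s) ^ 6)%N by rewrite leq_exp2r.
have B : (q1 * (2 * r) * (s ^ 5 * q ^ 5) <= q * s * (s ^ 5 * q ^ 5))%N by apply: leq_mul.
have e1 : ((q1 * (2 * r)) ^ 6 = 64 * (q1 ^ 6 * r ^ 6))%N by rewrite !expnMn; ring.
have e2 : (q1 * (2 * r) * (s ^ 5 * q ^ 5) = 2 * (q1 * s ^ 5 * q ^ 5 * r))%N by ring.
have e3 : (q * s * (s ^ 5 * q ^ 5) = (q * s) ^ 6)%N by rewrite expnMn; ring.
have e4 : (s ^ 6 * (q ^ 6 + q ^ 5) = (q * s) ^ 6 + s ^ 6 * q ^ 5)%N by rewrite expnMn; ring.
rewrite e4 in hi; rewrite e1 in A6; rewrite e2 e3 in B.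
move: hi A6 B.
set X := (q1 ^ 6 * r ^ 6)%N; set Y := (q1 * s ^ 5 * q ^ 5 * r)%N; set Z := ((q * s) ^ 6)%N.
set W := (s ^ 6 * q ^ 5)%N.
move=> h1 h3 h4; clearbody X Y Z W; clear e1 e2 e3 e4 A hq1 h2 hq.
lia.
Qed.

Lemma unit_val_neq0 (F: finFieldType) (g : {unit F}) : val g != 0.
Proof. by rewrite -unitfE; case: g. Qed.

Section L.
Variable F : fieldType.
Variable c : 'I_2 -> 'I_2 -> 'I_2 -> F.

Lemma lin1 x y z : form3 c x y z = x.1 * form3 c (1,0) y z + x.2 * form3 c (0,1) y z.
Proof. rewrite /form3 !big_ord_recl !big_ord0 /Defs.coord /=. ring. Qed.
Lemma lin2 x y z : form3 c x y z = y.1 * form3 c x (1,0) z + y.2 * form3 c x (0,1) z.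
Proof. rewrite /form3 !big_ord_recl !big_ord0 /Defs.coord /=. ring. Qed.
Lemma lin3 x y z : form3 c x y z = z.1 * form3 c x y (1,0) + z.2 * form3 c x y (0,1).
Proof. rewrite /form3 !big_ord_recl !big_ord0 /Defs.coord /=. ring. Qed.

Lemma pick_lin (g : F * F -> F) x a b :
  (forall x, g x = x.1 * g (1,0) + x.2 * g (0,1)) ->
  g x != 0 -> a != b -> g (1,a) != 0 \/ g (1,b) != 0.
Proof.
move=> hg hx hab.
case: (eqVneq (g (1,a)) 0) => ha; last by left.
case: (eqVneq (g (1,b)) 0) => hb; last by right.
exfalso; move: hx; rewrite hg.
move: ha hb; rewrite (hg (1,a)) (hg (1,b)) /= !mul1r => ha hb.
have h01 : g (0,1) = 0.
  have : (a - b) * g (0,1) = 0 by rewrite mulrBl -[a * _](addKr (g (1,0))) ha addr0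
     -[b * _](addKr (g (1,0))) hb addr0 subrr.
  by move/eqP; rewrite mulf_eq0 subr_eq0 (negbTE hab) /= => /eqP.
have h10 : g (1,0) = 0 by move: ha; rewrite h01 mulr0 addr0.
by rewrite h10 h01 !mulr0 addr0 eqxx.
Qed.
End L.

Theorem mainTheorem8 (F : finFieldType) (s : nat)
  (Gamma : {group {unit F}}) (H : {set F})
  (c : 'I_2 -> 'I_2 -> 'I_2 -> F) :
  (3 <= #|F|)%N ->
  (s %| #|F|.-1)%N ->
  #|Gamma| = (#|F|.-1 %/ s)%N ->
  (forall h, h \in H -> h != 0) ->
  (forall h1 h2, h1 \in H -> h2 \in H ->
     (exists2 g, g \in Gamma & h1 = h2 * val g) -> h1 = h2) ->
  let q := #|F| in
  let r := #|H| in
  let HG := [set h * val g | h in H, g in Gamma] in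
  let E := [set (x, x * y) | x in HG, y in HG] in
  (s ^ 6 * (q ^ 6 + q ^ 5) < (q - 1) ^ 6 * r ^ 6 + (q - 1) * s ^ 5 * q ^ 5 * r)%N ->
  (exists j : 'I_3, nondeg_in c j) ->
  forall t : F, t != 0 ->
    exists x y z, [/\ x \in E, y \in E, z \in E & form3 c x y z = t].
Proof.
move=> hq hs hG hH0 hHc q r HG E hineq [j hj] t ht.
have hr : (s < 2 * r)%N by apply: ineq_step hineq.
have hs0 : (0 < s)%N.
  case: s hs {hG hineq hr} => //; rewrite dvd0n -subn1 => /eqP; lia.
have hGs : (#|Gamma| * s = q - 1)%N by rewrite hG divnK // subn1.
have hHG : #|HG| = (r * #|Gamma|)%N.
  rewrite /HG curry_imset2X card_in_imset ?cardsX //.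
  move=> [h1 g1] [h2 g2] /setXP [/= h1H g1G] /setXP [/= h2H g2G] /= e.
  have eh : h1 = h2.
    apply: hHc => //; exists (g2 * g1^-1)%g; first by rewrite groupM ?groupV.
    rewrite FinRing.val_unitM FinRing.val_unitV mulrA -e mulrK //.
    by rewrite unitfE unit_val_neq0.
  subst h2; congr (_, _); apply: val_inj; exact: (mulfI (hH0 _ h1H) e).
have hG0 : (0 < #|Gamma|)%N by apply: cardG_gt0.
have hHG2 : (q - 1 < 2 * #|HG|)%N.
  rewrite hHG -hGs mulnA [(#|Gamma| * s)%N]mulnC ltn_pmul2r //.
have hsub : HG \subset [set~ 0].
  apply/subsetP => x /imset2P [h g hH gG ->]; rewrite !inE mulf_neq0 ?unit_val_neq0 //.
  exact: hH0.
have hprod : forall u : F, u != 0 -> exists a b, [/\ a \in HG, b \in HG & a * b = u].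
  move=> u hu.
  pose B := [set u / b | b in HG].
  have hB : #|B| = #|HG|.
    apply: card_imset => b1 b2 /(mulfI hu) /invr_inj //.
  have hBs : B \subset [set~ 0].
    apply/subsetP => w /imsetP [b bH ->]; rewrite !inE mulf_neq0 // invr_eq0.
    by move/subsetP: hsub => /(_ b bH); rewrite !inE.
  case: (set_0Vmem (HG :&: B)) => [e0|[a]].
    have := cardsUI HG B; rewrite e0 cards0 addn0 hB => e1.
    have : HG :|: B \subset [set~ (0:F)] by rewrite subUset hsub hBs.
    move/subset_leq_card; rewrite cardsC1 -subn1 -/q e1; lia.
  rewrite inE => /andP [aH /imsetP [b bH eb]].
  exists a, b; split => //; rewrite eb divfK //.
  by move/subsetP: hsub => /(_ b bH); rewrite !inE.

have [x0 [y0 [z0 hxyz]]] : exists x y z, form3 c x y z != 0.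
  have hv : ((1, 0) : F * F) != (0, 0) by rewrite xpair_eqE oner_eq0.
  have [u [w]] := hj _ hv.
  case: ifP => _; first by move=> h; exists (1,0), u, w.
  case: ifP => _; first by move=> h; exists u, (1,0), w.
  by move=> h; exists u, w, (1,0).
have [a [b [aH bH ab]]] : exists a b, [/\ a \in HG, b \in HG & a != b].
  apply/card_gt1P; move: hHG2; rewrite /q; lia.
have choose : forall g : F -> F, g a != 0 \/ g b != 0 -> exists2 y, y \in HG & g y != 0.
  by move=> g [h|h]; [exists a | exists b].
have [y1 y1H h1] : exists2 y, y \in HG & form3 c (1, y) y0 z0 != 0.
  apply: (choose (fun y => form3 c (1, y) y0 z0)).
  by apply: (@pick_lin F (fun x => form3 c x y0 z0) _ a b _ hxyz ab) => x; apply: lin1.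
have [y2 y2H h2] : exists2 y, y \in HG & form3 c (1, y1) (1, y) z0 != 0.
  apply: (choose (fun y => form3 c (1, y1) (1, y) z0)).
  by apply: (@pick_lin F (fun x => form3 c (1, y1) x z0) _ a b _ h1 ab) => x; apply: lin2.
have [y3 y3H h3] : exists2 y, y \in HG & form3 c (1, y1) (1, y2) (1, y) != 0.
  apply: (choose (fun y => form3 c (1, y1) (1, y2) (1, y))).
  by apply: (@pick_lin F (fun x => form3 c (1, y1) (1, y2) x) _ a b _ h2 ab) => x; apply: lin3.
set v := form3 c (1, y1) (1, y2) (1, y3) in h3.
have a0 : a != 0 by move/subsetP: hsub => /(_ a aH); rewrite !inE.
have tv0 : t / (v * a) != 0 by rewrite mulf_neq0 // invr_eq0 mulf_neq0.
have [a1 [a2 [a1H a2H e12]]] := hprod (t / (v * a)) tv0.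
exists (a1, a1 * y1), (a2, a2 * y2), (a, a * y3); split.
- by apply/imset2P; exists a1 y1.
- by apply/imset2P; exists a2 y2.
- by apply/imset2P; exists a y3.
have sc : forall k y Y Z, form3 c (k, k * y) Y Z = k * form3 c (1, y) Y Z.
  by move=> k y Y Z; rewrite lin1 (@lin1 _ c (1, y)) /=; ring.
have sc2 : forall k y X Z, form3 c X (k, k * y) Z = k * form3 c X (1, y) Z.
  by move=> k y X Z; rewrite lin2 (@lin2 _ c X (1, y)) /=; ring.
have sc3 : forall k y X Y, form3 c X Y (k, k * y) = k * form3 c X Y (1, y).
  by move=> k y X Y; rewrite lin3 (@lin3 _ c X Y (1, y)) /=; ring.
rewrite sc sc2 sc3 -/v mulrA mulrA e12.
by rewrite -mulrA [a * v]mulrC divfK // mulf_neq0.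
Qed.
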